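(* For any variety $\mathcal{V}$ of $\Omega$-algebras, $\mathcal{V}\circ\mathcal{S}\subseteq\mathcal{V}^p$.
   Context: Standing conventions: $\Omega$-algebras are of a plural similarity type (no nullary operation symbols, at least one operation symbol of arity $\ge2$). $T_n$ is the set of $\Omega$-terms in $x_1,\dots,x_n$ in which all $n$ variables occur. An identity is regular if the same variables occur on both sides. $\mathcal{S}$ is the variety of $\Omega$-algebras satisfying all regular identities. $\mathcal{V}\circ\mathcal{S}$ is the class of $\Omega$-algebras $A$ having a congruence $\theta$ with $A/\theta\in\mathcal{S}$ and every $\theta$-class (a subalgebra) in $\mathcal{V}$. Prolongation: for an identity $\sigma$ of the form $u(y_1,\dots,y_n)=v(y_1,\dots,y_n)$ and $m\ge1$, $\sigma^p_m$ is the set of identities $u(r_1,\dots,r_n)=v(r_1,\dots,r_n)$ obtained by substituting $r_i(x_1,\dots,x_m)$ for $y_i$, with $r_i$ ranging over $T_m$; $\sigma^p=\bigcup_m\sigma^p_m$; $\Sigma^p=\bigcup_{\sigma\in\Sigma}\sigma^p$. $\mathcal{V}^p$ is the variety defined by $\mathrm{Id}(\mathcal{V})^p$, where $\mathrm{Id}(\mathcal{V})$ is the set of all identities holding in $\mathcal{V}$. *)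

(* Defs.v *)
From mathcomp Require Import ssreflect ssrfun ssrbool eqtype ssrnat fintype.
From Stdlib Require Import ClassicalEpsilon.

Set Implicit Arguments.
Unset Strict Implicit.
Unset Printing Implicit Defensive.

Record signature := Signature { Op : Type; arity : Op -> nat }.

Definition plural (Sg : signature) : Prop :=
  (forall o : Op Sg, 0 < arity o) /\ (exists o : Op Sg, 1 < arity o).

Record algebra (Sg : signature) := Algebra {
  carrier :> Type;
  op : forall o : Op Sg, ('I_(arity o) -> carrier) -> carrier }.

(* Terms in the variables x_0, x_1, ... (indexed by nat; x_{i} here is x_{i+1} of the paper). *)
Inductive term (Sg : signature) : Type :=
| Var : nat -> term Sg
| App : forall o : Op Sg, ('I_(arity o) -> term Sg) -> term Sg.

Arguments Var {Sg} _.

Fixpoint eval (Sg : signature) (A : algebra Sg) (v : nat -> A) (t : term Sg) : A :=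
  match t with
  | Var i => v i
  | @App _ o f => @op _ A o (fun k => eval v (f k))
  end.

Fixpoint subst (Sg : signature) (s : nat -> term Sg) (t : term Sg) : term Sg :=
  match t with
  | Var i => s i
  | @App _ o f => @App _ o (fun k => subst s (f k))
  end.

Fixpoint occurs (Sg : signature) (i : nat) (t : term Sg) : Prop :=
  match t with
  | Var j => i = j
  | @App _ o f => exists k, occurs i (f k)
  end.

Definition in_T (Sg : signature) (m : nat) (t : term Sg) : Prop :=
  (forall i, occurs i t -> i < m) /\ (forall i, i < m -> occurs i t).

Definition identity (Sg : signature) : Type := (term Sg * term Sg)%type.

Definition satisfies (Sg : signature) (A : algebra Sg) (e : identity Sg) : Prop :=
  forall v : nat -> A, eval v e.1 = eval v e.2.

Definition Mod (Sg : signature) (Sigma : identity Sg -> Prop) (A : algebra Sg) : Prop :=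
  forall e, Sigma e -> satisfies A e.

Definition is_variety (Sg : signature) (V : algebra Sg -> Prop) : Prop :=
  exists Sigma : identity Sg -> Prop, forall A, V A <-> Mod Sigma A.

Definition Id (Sg : signature) (V : algebra Sg -> Prop) (e : identity Sg) : Prop :=
  forall A, V A -> satisfies A e.

Definition regular (Sg : signature) (e : identity Sg) : Prop :=
  forall i, occurs i e.1 <-> occurs i e.2.

Definition S_var (Sg : signature) : algebra Sg -> Prop := Mod (@regular Sg).

Definition prolong_m (Sg : signature) (m : nat) (sigma : identity Sg) (e : identity Sg) : Prop :=
  exists s : nat -> term Sg,
    (forall i, (occurs i sigma.1 \/ occurs i sigma.2) -> in_T m (s i)) /\
    e = (subst s sigma.1, subst s sigma.2).

Definition prolong (Sg : signature) (Sigma : identity Sg -> Prop) (e : identity Sg) : Prop :=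
  exists sigma, Sigma sigma /\ exists m, 1 <= m /\ prolong_m m sigma e.

Definition Vp (Sg : signature) (V : algebra Sg -> Prop) : algebra Sg -> Prop :=
  Mod (prolong (Id V)).

Definition congruence (Sg : signature) (A : algebra Sg) (th : A -> A -> Prop) : Prop :=
  (forall a, th a a) /\ (forall a b, th a b -> th b a) /\
  (forall a b c, th a b -> th b c -> th a c) /\
  (forall o (f g : 'I_(arity o) -> A), (forall k, th (f k) (g k)) -> th (@op _ A o f) (@op _ A o g)).

(* Quotient algebra A/th: carrier = the set of th-classes; operations act on
   (arbitrarily chosen) representatives. *)
Definition qcarrier (Sg : signature) (A : algebra Sg) (th : A -> A -> Prop) : Type :=
  {P : A -> Prop | exists a, P = th a}.

Definition qclass (Sg : signature) (A : algebra Sg) (th : A -> A -> Prop) (a : A)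
  : qcarrier th := exist _ (th a) (ex_intro _ a erefl).

Definition qrep (Sg : signature) (A : algebra Sg) (th : A -> A -> Prop)
  (c : qcarrier th) : A :=
  proj1_sig (constructive_indefinite_description _ (proj2_sig c)).

Definition quotient (Sg : signature) (A : algebra Sg) (th : A -> A -> Prop) : algebra Sg :=
  @Algebra Sg (qcarrier th)
    (fun o F => qclass th (@op _ A o (fun k => qrep (F k)))).

Definition closed (Sg : signature) (A : algebra Sg) (P : A -> Prop) : Prop :=
  forall o (f : 'I_(arity o) -> A), (forall k, P (f k)) -> P (@op _ A o f).

Definition subalgebra (Sg : signature) (A : algebra Sg) (P : A -> Prop)
  (H : closed P) : algebra Sg :=
  @Algebra Sg {a : A | P a}
    (fun o f => exist _ (@op _ A o (fun k => proj1_sig (f k)))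
                        (H o _ (fun k => proj2_sig (f k)))).

Definition VoS (Sg : signature) (V : algebra Sg -> Prop) (A : algebra Sg) : Prop :=
  exists th : A -> A -> Prop,
    congruence th /\ S_var (quotient th) /\
    forall a : A, exists H : closed (th a), V (subalgebra H).

(* Main.v *)
Require Import Defs.
From mathcomp Require Import ssreflect ssrfun ssrbool eqtype ssrnat fintype.
From Stdlib Require Import ClassicalEpsilon FunctionalExtensionality.

Lemma qeval (Sg : signature) (A : algebra Sg) (th : A -> A -> Prop)
  (Hc : congruence th) (w : nat -> A) (t : term Sg) : forall x,
  proj1_sig (@eval Sg (quotient th) (fun j => qclass th (w j)) t) x <-> th (eval w t) x.
Proof.
  destruct Hc as [Hr [Hs [Ht Hop]]].
  induction t as [i|o f IH]; simpl.
  - intro x; tauto.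
  - intro x.
    have Hk : forall k, th (qrep (@eval Sg (quotient th) (fun j => qclass th (w j)) (f k)))
                          (eval w (f k)).
    { intro k. unfold qrep.
      destruct (constructive_indefinite_description _ _) as [a Ha]. simpl.
      have := IH k a. rewrite Ha. intros [H1 _]. apply Hs. apply H1. apply Hr. }
    have Hcg := Hop o _ _ Hk.
    split; intro H.
    + apply: Ht H. apply Hs; exact Hcg.
    + apply: Ht H. exact Hcg.
Qed.

Lemma subeval (Sg : signature) (A : algebra Sg) (P : A -> Prop) (H : closed P)
  (w' : nat -> subalgebra H) (w : nat -> A) (s : nat -> term Sg) (t : term Sg) :
  (forall i, occurs i t -> proj1_sig (w' i) = eval w (s i)) ->
  proj1_sig (eval w' t) = eval w (subst s t).
Proof.
  induction t as [i|o f IH]; simpl => H0.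
  - by apply H0.
  - f_equal. apply functional_extensionality => k. apply IH.
    intros i Hi. apply H0. by exists k.
Qed.

Theorem proposition2p7 (Sg : signature) (HSg : plural Sg)
  (V : algebra Sg -> Prop) (HV : is_variety V) (A : algebra Sg) :
  VoS V A -> Vp V A.
Proof.
  move=> [th [Hc [HS Hcl]]] e [sigma [Hsig [m [Hm [s [Hs He]]]]]] w.
  subst e. simpl.
  set occ := fun i => occurs i sigma.1 \/ occurs i sigma.2.
  have key : forall i j, occ i -> occ j -> th (eval w (s i)) (eval w (s j)).
  { intros i j Hi Hj.
    have Hreg : regular (s i, s j).
    { intro k; simpl. destruct (Hs i Hi) as [a b]. destruct (Hs j Hj) as [c d].
      split; auto. }
    have Heq := HS _ Hreg (fun k => qclass th (w k)). simpl in Heq.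
    apply (proj1 (@qeval Sg A th Hc w (s i) _)). rewrite Heq.
    apply (proj2 (@qeval Sg A th Hc w (s j) _)). apply (proj1 Hc). }
  have fin : forall a0, (forall i, occ i -> th a0 (eval w (s i))) ->
      eval w (subst s sigma.1) = eval w (subst s sigma.2).
  { intros a0 Ha0. destruct (Hcl a0) as [H HV'].
    pose w' : nat -> subalgebra H := fun i =>
      match excluded_middle_informative (occ i) with
      | left h => exist _ (eval w (s i)) (Ha0 i h)
      | right _ => exist _ a0 (proj1 Hc a0) end.
    have Heq := Hsig _ HV' w'.
    have := f_equal (@proj1_sig _ _) Heq.
    rewrite (@subeval Sg A _ H w' w s sigma.1).
    - rewrite (@subeval Sg A _ H w' w s sigma.2) //.
      intros i Hi. unfold w'. destruct (excluded_middle_informative (occ i)) as [h|n].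
      + reflexivity.
      + exfalso; apply n; right; exact Hi.
    - intros i Hi. unfold w'. destruct (excluded_middle_informative (occ i)) as [h|n].
      + reflexivity.
      + exfalso; apply n; left; exact Hi. }
  destruct (classic (exists i, occ i)) as [[i0 Hi0]|Hno].
  - apply (fin (eval w (s i0))). intros i Hi. exact (key i0 i Hi0 Hi).
  - apply (fin (w 0)). intros i Hi. exfalso. apply Hno. by exists i.
Qed.
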